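(* Let $q\in\mathbb{C}$ with $0<|q|<1$ and $l,m,n,u\in\mathbb{N}$. Then \[ \sum_{k=0}^\infty\frac{q^{k^2} (q)_{l+m+n-k}} {(q)_k (q)_{l-k}(q)_{m-k}(q)_{n-k} (q)_{u+k}} =\sum_{k=-\infty}^\infty\frac{(-1)^k q^{(5k^2-k)/2} (q)_{l+m}(q)_{l+n}(q)_{m+n}(q)_{u-1}} {(q)_{l-k}(q)_{m-k}(q)_{n-k}(q)_{u-k}(q)_{l+k}(q)_{m+k}(q)_{n+k}(q)_{u+k-1}}, \] and \[ \sum_{k=0}^\infty\frac{q^{k^2+k} (q)_{l+m+n-k}} {(q)_k (q)_{l-k}(q)_{m-k}(q)_{n-k}(q)_{u+k}} =\sum_{k=-\infty}^\infty\frac{(-1)^k q^{(5k^2-3k)/2} (q)_{l+m}(q)_{m+n}(q)_{l+n}(q)_{u-1}} {(q)_{l-k}(q)_{m-k}(q)_{n-k}(q)_{u-k}(q)_{l+k}(q)_{m+k}(q)_{n+k}(q)_{u+k-1}}. \]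
   Context: For an integer $n$, $(q)_n=(q;q)_n$ with $(q)_0=1$, $(q)_n=(1-q)(1-q^2)\cdots(1-q^n)$ for $n\ge1$, and $(q)_n=[(1-q^{0})\cdots]$ interpreted via $(a)_n=[(1-aq^{-1})(1-aq^{-2})\cdots(1-aq^{n})]^{-1}$ for $n\le-1$ with $a=q$; in particular $(q)_{-1}=1/(1-q^{0})$ is not used as a value except through the convention $1/(q)_n=0$ for $n<0$. *)

(* Defs.v *)
(* q lives in C := R[i] = complex R for a real closed field R
   (for R the real numbers this is the field of complex numbers). *)
From HB Require Import structures.
From mathcomp Require Import all_boot all_order all_algebra.
From mathcomp Require Export complex.
Set Implicit Arguments. Unset Strict Implicit. Unset Printing Implicit Defensive.
Import Order.TTheory GRing.Theory Num.Theory.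
Local Open Scope ring_scope.

Section QPoch.
Variable (C : comUnitRingType) (q : C).

Definition qfac (n : nat) : C := \prod_(1 <= j < n.+1) (1 - q ^+ j).

(* 1/(q)_z for an integer z, with the convention 1/(q)_z = 0 for z < 0 *)
Definition rqfac (z : int) : C :=
  match z with Posz n => (qfac n)^-1 | Negz _ => 0 end.

(* The factor (q)_{u-1} / ((q)_{u-k} (q)_{u+k-1}).
   For u >= 1 all indices of (q) in the numerator are >= 0 and the
   denominators are read with the convention 1/(q)_z = 0 for z < 0.
   For u = 0 the numerator (q)_{-1} = 1/(1-q^0) has a pole, and exactly one of
   (q)_{-k}, (q)_{k-1} is a (q)_{-n} with n >= 1, given by the general definition
   (q)_{-n} = 1/[(1-q^0)(1-q^{-1})...(1-q^{-(n-1)})]; the common factor (1-q^0)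
   cancels formally, leaving
     (q)_{-1}/(q)_{-n} = (1-q^{-1})...(1-q^{-(n-1)}),
   divided by the remaining (q)_{n-1}. *)
Definition negpoch_ratio (n : nat) : C :=
  \prod_(1 <= j < n) (1 - (q ^+ j)^-1).

Definition ufactor (u : nat) (k : int) : C :=
  if (0 < u)%N then qfac u.-1 * rqfac (u%:Z - k) * rqfac (u%:Z + k - 1)
  else if (0 < k) then negpoch_ratio `|k|%N * (qfac `|k - 1|%N)^-1
  else negpoch_ratio `|1 - k|%N * (qfac `|k|%N)^-1.

Definition lhs_term (e l m n u k : nat) : C :=
  q ^+ (k * k + e * k) * qfac (l + m + n - k)
  * rqfac k%:Z * rqfac (l%:Z - k%:Z) * rqfac (m%:Z - k%:Z) * rqfac (n%:Z - k%:Z)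
  * rqfac (u + k)%:Z.

Definition rhs_term (e l m n u : nat) (k : int) : C :=
  (-1) ^ k * q ^ ((5 * k * k - (1 + 2 * e%:Z) * k) %/ 2)%Z
  * qfac (l + m) * qfac (l + n) * qfac (m + n)
  * rqfac (l%:Z - k) * rqfac (m%:Z - k) * rqfac (n%:Z - k)
  * rqfac (l%:Z + k) * rqfac (m%:Z + k) * rqfac (n%:Z + k)
  * ufactor u k.

End QPoch.

(* Main.v *)
Require Import Defs.
From HB Require Import structures.
From mathcomp Require Import all_boot all_order all_algebra.
From mathcomp Require Import complex.
From mathcomp Require Import ring zify.
Import Order.TTheory GRing.Theory Num.Theory.
Local Open Scope ring_scope.

Section Basic.
Variable (C : fieldType) (q : C).
Hypothesis hq0 : q != 0.
Hypothesis hq1 : forall n : nat, (0 < n)%N -> q ^+ n != 1.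
Hypothesis h2C : (2%:R : C) != 0.

Lemma qfac0 : qfac q 0 = 1.
Proof. by rewrite /qfac big_geq. Qed.

Lemma qfacS n : qfac q n.+1 = qfac q n * (1 - q ^+ n.+1).
Proof. by rewrite /qfac big_nat_recr. Qed.

Lemma onem_neq0 n : (0 < n)%N -> 1 - q ^+ n != 0.
Proof. by move=> hn; rewrite subr_eq0 eq_sym hq1. Qed.

Lemma qfac_neq0 n : qfac q n != 0.
Proof.
elim: n => [|n IH]; first by rewrite qfac0 oner_neq0.
by rewrite qfacS mulf_neq0 // onem_neq0.
Qed.

Lemma rq_nat (n : nat) : rqfac q n = (qfac q n)^-1.
Proof. by []. Qed.

Lemma rq_neg (z : int) : z < 0 -> rqfac q z = 0.
Proof. by case: z. Qed.

Lemma qz_nat (n : nat) : q ^ (n%:Z) = q ^+ n.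
Proof. by []. Qed.

Lemma rq_pred (z : int) : rqfac q (z - 1) = rqfac q z * (1 - q ^ z).
Proof.
case: z => [[|n]|n].
- by rewrite /= expr0z subrr mulr0.
- have -> : (n.+1%:Z - 1 = n%:Z)%R by rewrite -addn1 PoszD addrK.
  rewrite /= qfacS invfM -mulrA mulVf ?mulr1 //.
  by rewrite onem_neq0.
- have -> : (Negz n - 1 = Negz n.+1)%R by rewrite !NegzE; lia.
  by rewrite /= mul0r.
Qed.


Lemma qzD (a b : int) : q ^ (a + b) = q ^ a * q ^ b.
Proof. exact: expfzDr. Qed.

Lemma qzN (a : int) : q ^ (- a) = (q ^ a)^-1.
Proof. by rewrite invr_expz. Qed.

Lemma qz_neq0 (a : int) : q ^ a != 0.
Proof. exact: expfz_neq0. Qed.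

Lemma qz_mul (a : nat) (k : int) : q ^ (a%:Z * k) = (q ^ k) ^+ a.
Proof. by rewrite mulrC -exprz_exp. Qed.

Lemma qzS (k : int) : q ^ (k + 1) = q ^ k * q.
Proof. by rewrite qzD expr1z. Qed.

Definition Pp (j : nat) (x : C) := \prod_(i < j.*2) (1 - x * q ^+ i / q ^+ j).
Definition Dp (j : nat) (x : C) := \prod_(i < j.*2.+1) (1 - x * q ^+ i.+1 / q ^+ j.+1).

Lemma qX_neq0 n : q ^+ n != 0.
Proof. exact: expf_neq0. Qed.

Lemma m1_neq0 : (-1 : C) != 0.
Proof. by rewrite oppr_eq0 oner_neq0. Qed.

Ltac nz := repeat (apply/andP; split); rewrite ?oner_neq0 ?oppr_eq0 ?oner_neq0 ?hq0 ?qX_neq0 ?qz_neq0 ?qfac_neq0 ?mulf_neq0 ?expf_neq0 ?invr_eq0 ?hq0 ?qX_neq0 ?qz_neq0 //; try exact: m1_neq0.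

Lemma Pp0 x : Pp 0 x = 1.
Proof. by rewrite /Pp big_ord0. Qed.

Lemma PpS j x : Pp j.+1 x = (1 - x / q ^+ j.+1) * Dp j x.
Proof.
by rewrite /Pp doubleS big_ord_recl /= expr0 mulr1.
Qed.

Lemma PpSq j x : Pp j.+1 (q * x) = Dp j x * (1 - x * q ^+ j.+1).
Proof.
rewrite /Pp doubleS big_ord_recr /=; congr (_ * _).
  by apply: eq_bigr => i _; rewrite [q ^+ i.+1]exprS; field; exact: qX_neq0.
congr (_ - _); have -> : j.*2.+1 = (j.+1 + j)%N by rewrite -addnn addSn.
rewrite exprD !exprS; have := qX_neq0 j => h. field. by rewrite h hq0.
Qed.

Lemma Dp_Pp j x : Dp j x = Pp j x * (1 - x * q ^+ j).
Proof.
rewrite /Dp /Pp big_ord_recr /=; congr (_ * _).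
  apply: eq_bigr => i _; congr (_ - _).
  have := qX_neq0 j => h. rewrite !exprS. field; nz.
congr (_ - _); have -> : j.*2.+1 = (j.+1 + j)%N by rewrite -addnn addSn. rewrite exprD.
have := qX_neq0 j => h. rewrite !exprS. field; nz.
Qed.

Lemma PpS' j x : Pp j.+1 x = (1 - x / q ^+ j.+1) * (1 - x * q ^+ j) * Pp j x.
Proof. rewrite PpS Dp_Pp; ring. Qed.

Lemma Psym j K : K != 0 -> Pp j (q / K) = (q / K ^+ 2) ^+ j * Pp j K.
Proof.
move=> hK; elim: j => [|j IH]; first by rewrite !Pp0 expr0 mulr1.
rewrite !PpS' IH exprS.
have := qX_neq0 j => h.
rewrite !exprS; field.
nz.
Qed.

Definition sj (j : nat) : C := (-1) ^+ j * q ^+ 'C(j.+1, 2) / qfac q j.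
Definition Mx (k : int) (j : nat) : C :=
  sj j * q ^ (- ((k - 1) * (k + j%:Z))) * Pp j (q ^ k).

Lemma Mx_sym k j : Mx (1 - k) j = Mx k j.
Proof.
rewrite /Mx; have -> : q ^ (1 - k) = q / q ^ k by rewrite qzD expr1z qzN.
rewrite Psym ?qz_neq0 // -!mulrA; congr (_ * _); rewrite !mulrA; congr (_ * _).
have -> : (- ((1 - k - 1) * (1 - k + j%:Z)) = - ((k - 1) * (k + j%:Z)) + (j%:Z * k + j%:Z * k) - j%:Z)%R by ring.
rewrite !qzD qzN !qz_mul expr2 !exprMn exprVn.
have := qz_neq0 k => hK. have := qX_neq0 j => hJ.
rewrite ?qz_nat ?exprMn. field; nz.
Qed.

Lemma Pp_zero j (k : int) : - (j%:Z) < k -> k <= j%:Z -> Pp j (q ^ k) = 0.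
Proof.
move=> h1 h2.
have hi : (`|j%:Z - k| < j.*2)%N by rewrite -!(ltz_nat) ; lia.
rewrite /Pp (bigD1 (Ordinal hi)) //= mulrC.
apply/eqP; rewrite mulf_eq0; apply/orP; right.
rewrite subr_eq0 eq_sym -qz_nat -qz_nat -mulrA -qzN -!qzD.
have -> : (k + (`|(j%:Z - k)%R|%N%:Z - j%:Z) = 0)%R by lia.
by rewrite expr0z.
Qed.

Lemma Mx_zero j (k : int) : - (j%:Z) < k -> k <= j%:Z -> Mx k j = 0.
Proof. by move=> h1 h2; rewrite /Mx Pp_zero // mulr0. Qed.

Lemma Mx1 j : Mx 1 j = (j == 0%N)%:R.
Proof.
case: j => [|j].
  rewrite /Mx /sj Pp0 /= expr0 mul1r bin_small // expr0 qfac0 subrr mul0r expr0z.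
  by rewrite invr1 !mulr1.
have h1 : - (j.+1%:Z) < 1 by lia. have h2 : (1 <= j.+1%:Z)%R by lia. by rewrite (Mx_zero _ _ h1 h2).
Qed.


Lemma Dp0 x : Dp 0 x = 1 - x.
Proof. by rewrite /Dp big_ord_recl big_ord0 mulr1 /= expr1 mulfK. Qed.

Lemma DpS j x : Dp j.+1 x = (1 - x / q ^+ j.+1) * Dp j x * (1 - x * q ^+ j.+1).
Proof. by rewrite Dp_Pp PpS. Qed.

Lemma sjS j : sj j.+1 = - sj j * q ^+ j.+1 / (1 - q ^+ j.+1).
Proof.
rewrite /sj qfacS binS bin1 exprD exprS.
have h1 := qfac_neq0 j. have h2 : 1 - q ^+ j.+1 != 0 by rewrite onem_neq0.
field; nz.
Qed.

Lemma expo1 (k : int) (j : nat) :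
  q ^ (- ((k + 1 - 1) * (k + 1 + j%:Z))) = q ^ (- ((k - 1) * (k + j%:Z))) / (q ^ k) ^+ 2 / q ^+ j.
Proof.
have -> : (- ((k + 1 - 1) * (k + 1 + j%:Z)) = - ((k - 1) * (k + j%:Z)) + - (2%:Z * k) + - j%:Z)%R by ring.
by rewrite !qzD (qzN (_ * k)) (qzN j%:Z) qz_mul qz_nat.
Qed.

Lemma expo2 (k : int) (j : nat) :
  q ^ (- ((k - 1) * (k + j.+1%:Z))) = q ^ (- ((k - 1) * (k + j%:Z))) / q ^ k * q.
Proof.
have -> : (- ((k - 1) * (k + j.+1%:Z)) = - ((k - 1) * (k + j%:Z)) + - k + 1)%R.
  have -> : (j.+1%:Z = j%:Z + 1)%R by lia. ring.
by rewrite !qzD (qzN k) expr1z.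
Qed.

Lemma expo3 (k : int) (j : nat) :
  q ^ (- ((k + 1 - 1) * (k + 1 + j.+1%:Z))) = q ^ (- ((k - 1) * (k + j%:Z))) / (q ^ k) ^+ 3 / q ^+ j.
Proof.
have -> : (- ((k + 1 - 1) * (k + 1 + j.+1%:Z)) = - ((k - 1) * (k + j%:Z)) + - (3%:Z * k) + - j%:Z)%R.
  have -> : (j.+1%:Z = j%:Z + 1)%R by lia. ring.
by rewrite !qzD (qzN (_ * k)) (qzN j%:Z) qz_mul qz_nat.
Qed.

Definition dco (k : int) (j : nat) := (q ^ k * Mx (k + 1) j - (q ^ k)^-1 * Mx k j) / q ^+ j.

Lemma coef_tel (u : nat) (k : int) (j : nat) :
  ((1 - q ^+ u * q ^ k) * Mx (k + 1) j - (1 - q ^+ u / q ^ k) * Mx k j) * rqfac q (u + j)%:Z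
  = dco k j * rqfac q ((u + j)%:Z - 1) - dco k j.+1 * rqfac q ((u + j.+1)%:Z - 1).
Proof.
have -> : ((u + j.+1)%:Z - 1 = (u + j)%:Z)%R by lia.
rewrite rq_pred qz_nat exprD /dco /Mx (expo1 k j) (expo2 k j) (expo3 k j) sjS qzS [q ^ k * q]mulrC.
have hK := qz_neq0 k. have hJ := qX_neq0 j.
have h2 : 1 - q ^+ j.+1 != 0 by rewrite onem_neq0.
case: j hJ h2 => [|j] hJ h2.
  rewrite PpSq !PpS !Pp0 Dp0 !expr0 !exprS !expr0.
  field; nz.
rewrite !PpSq !PpS !DpS.
rewrite !(exprS q j.+1).
field; nz.
Qed.


Lemma lem_fact (a b x y r : C) : a * (x * r) - b * (y * r) = (a * x - b * y) * r.
Proof. by rewrite mulrBl !mulrA. Qed.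

Definition Ex (u : nat) (k : int) (J : nat) := \sum_(j < J) Mx k j * rqfac q (u + j)%:Z.

Lemma dco0 k : dco k 0 = 0.
Proof.
rewrite /dco /Mx (expo1 k 0) !Pp0 expr0.
have hK := qz_neq0 k. field; nz.
Qed.

Lemma Ex_step (u : nat) (k : int) (J : nat) : - (J%:Z) < k -> k + 1 <= J%:Z ->
  (1 - q ^+ u * q ^ k) * Ex u (k + 1) J - (1 - q ^+ u / q ^ k) * Ex u k J = 0.
Proof.
move=> h1 h2.
rewrite /Ex !mulr_sumr -sumrB.
under eq_bigr => j _ do rewrite lem_fact coef_tel.
have -> : forall n, \sum_(j < n) (dco k j * rqfac q ((u + j)%:Z - 1) - dco k j.+1 * rqfac q ((u + j.+1)%:Z - 1))
   = dco k 0 * rqfac q ((u + 0)%:Z - 1) - dco k n * rqfac q ((u + n)%:Z - 1).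
  elim => [|n IH]; first by rewrite big_ord0 subrr.
  by rewrite big_ord_recr /= IH addrA subrK.
rewrite dco0 mul0r sub0r /dco.
rewrite (Mx_zero J (k + 1)) ?(Mx_zero J k) //; try lia.
by rewrite !mulr0 subrr mul0r mul0r oppr0.
Qed.

Lemma uf_rel (u : nat) (k : int) : 0 < k ->
  (1 - q ^+ u * q ^ k) * ufactor q u (k + 1) = (1 - q ^+ u / q ^ k) * ufactor q u k.
Proof.
move=> hk; rewrite /ufactor.
case: u => [|u] /=.
  have -> : (0 < k + 1) = true by apply/idP; lia.
  rewrite hk.
  case: k hk => [[|n]|n] //= _.
  have -> : (n.+1 + 1 - 1 = n.+1)%N by lia.
  have -> : (n.+1 + 1 = n.+2)%N by lia.
  have -> : (n.+1 - 1 = n)%N by lia.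
  rewrite /negpoch_ratio big_nat_recr //= qfacS expr0 mul1r.
  have h1 := qfac_neq0 n. have h2 : 1 - q ^+ n.+1 != 0 by rewrite onem_neq0.
  rewrite !qz_nat; field; nz.
have -> : (u.+1%:Z - (k + 1) = (u.+1%:Z - k) - 1)%R by ring.
have -> : (u.+1%:Z + (k + 1) - 1 = u.+1%:Z + k)%R by ring.
rewrite (rq_pred (u.+1%:Z + k)).
rewrite !rq_pred !qzD (qzN k) !qz_nat.
have hK := qz_neq0 k. field; nz.
Qed.

Lemma uf_sym (u : nat) (k : int) : ufactor q u (1 - k) = ufactor q u k.
Proof.
rewrite /ufactor; case: ifP => _.
  have -> : (u%:Z - (1 - k) = u%:Z + k - 1)%R by ring.
  have -> : (u%:Z + (1 - k) - 1 = u%:Z - k)%R by ring.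
  by rewrite -!mulrA [rqfac q (u%:Z + k - 1) * _]mulrC.
have -> : (1 - (1 - k) = k)%R by ring.
have -> : `|(1 - k - 1)%R|%N = `|k|%N by lia.
case: (ltrP 0 k) => hk.
  have -> : (0 < 1 - k) = false by lia.
  by have -> : `|(1 - k)%R|%N = `|(k - 1)%R|%N by lia.
have -> : (0 < 1 - k) = true by apply/idP; lia.
done.
Qed.

Lemma uf1 (u : nat) : ufactor q u 1 = rqfac q u%:Z.
Proof.
rewrite /ufactor; case: u => [|u] /=.
  by rewrite /negpoch_ratio big_geq // qfac0 invr1 mulr1.
have -> : (u.+1 - 1 = u)%N by lia.
have -> : (u.+1 + 1 - 1 = u.+1)%N by lia.
by rewrite mulfV ?qfac_neq0 // mul1r.
Qed.

Lemma Ex1 (u J : nat) : (0 < J)%N -> Ex u 1 J = rqfac q u%:Z.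
Proof.
case: J => [//|J] _; rewrite /Ex big_ord_recl Mx1 /= mul1r addn0 big1 ?addr0 //.
by move=> i _; rewrite Mx1 /= mul0r.
Qed.

Lemma expand_pos (u J n : nat) : (n < J)%N -> ufactor q u n.+1%:Z = Ex u n.+1%:Z J.
Proof.
elim: n => [|n IH] hn; first by rewrite uf1 Ex1 //; lia.
have h := Ex_step u n.+1%:Z J.
have e : (n.+1%:Z + 1 = n.+2%:Z)%R by lia.
rewrite e in h.
have hne : 1 - q ^+ u * q ^ n.+1%:Z != 0.
  by rewrite qz_nat -exprD onem_neq0 // addnS.
apply: (mulfI hne).
have := uf_rel u n.+1%:Z; rewrite e => ->; last by lia.
rewrite IH; last by lia.
apply/eqP; rewrite eq_sym -subr_eq0; apply/eqP; apply: h; lia.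
Qed.

Lemma expand (u : nat) (k : int) (J : nat) : (`|k| < J)%N ->
  ufactor q u k = \sum_(j < J) Mx k j * rqfac q (u + j)%:Z.
Proof.
move=> hk; rewrite -/(Ex u k J).
case: (ltrP 0 k) => h.
  case: k hk h => [[|n]|n] //= hk _.
  by rewrite (expand_pos u J n) //; lia.
rewrite -uf_sym /Ex.
under eq_bigr => j _ do rewrite -(Mx_sym k).
have [n hn] : exists n : nat, (1 - k = n.+1%:Z)%R.
  exists `|k|%N; lia.
rewrite hn (expand_pos u J n) //; lia.
Qed.


Section Sum.
Variables (e l m n : nat).

Definition Bt (k : int) : C :=
  (-1) ^ k * q ^ ((5 * k * k - (1 + 2 * e%:Z) * k) %/ 2)%Z
  * qfac q (l + m) * qfac q (l + n) * qfac q (m + n)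
  * rqfac q (l%:Z - k) * rqfac q (m%:Z - k) * rqfac q (n%:Z - k)
  * rqfac q (l%:Z + k) * rqfac q (m%:Z + k) * rqfac q (n%:Z + k).

Lemma rhs_Bt u k : rhs_term q e l m n u k = Bt k * ufactor q u k.
Proof. by []. Qed.

Definition Gt (j : nat) (k : int) : C :=
  q ^+ ((1 + j) * e + 1) * qfac q (l + m) * qfac q (l + n) * qfac q (m + n)
  * (-1) ^ k * q ^ ((5 * k * (k - 1)) %/ 2)%Z
  * rqfac q (l%:Z - k) * rqfac q (l%:Z + k - 1)
  * rqfac q (m%:Z - k) * rqfac q (m%:Z + k - 1)
  * rqfac q (n%:Z - k) * rqfac q (n%:Z + k - 1) * Mx k j.

Definition aj (j : nat) := (1 - q ^+ j.+1) * (1 - q ^+ (l + m + n) / q ^+ j).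
Definition bj (j : nat) := q ^+ (j.*2 + 1 + e) * (1 - q ^+ l / q ^+ j)
   * (1 - q ^+ m / q ^+ j) * (1 - q ^+ n / q ^+ j).

Lemma expB (k : int) : q ^ ((5 * k * k - (1 + 2 * e%:Z) * k) %/ 2)%Z
  = q ^ ((5 * k * (k - 1)) %/ 2)%Z * (q ^ k) ^+ 2 / (q ^ k) ^+ e.
Proof.
have -> : (5 * k * k - (1 + 2 * e%:Z) * k = (2%:Z * k - e%:Z * k) * 2 + 5 * k * (k - 1))%R by ring.
rewrite divzMDl // qzD qzD (qzN (_ * k)) !qz_mul. have := qz_neq0 k => hK. field; nz.
Qed.

Lemma expBm (k : int) : q ^ ((5 * (- k) * (- k) - (1 + 2 * e%:Z) * (- k)) %/ 2)%Z
  = q ^ ((5 * k * (k - 1)) %/ 2)%Z * (q ^ k) ^+ 3 * (q ^ k) ^+ e.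
Proof.
have -> : (5 * (- k) * (- k) - (1 + 2 * e%:Z) * (- k) = (3%:Z * k + e%:Z * k) * 2 + 5 * k * (k - 1))%R by ring.
rewrite divzMDl // !qzD !qz_mul; ring.
Qed.

Lemma expG1 (k : int) : q ^ ((5 * (k + 1) * (k + 1 - 1)) %/ 2)%Z
  = q ^ ((5 * k * (k - 1)) %/ 2)%Z * (q ^ k) ^+ 5.
Proof.
have -> : (5 * (k + 1) * (k + 1 - 1) = (5%:Z * k) * 2 + 5 * k * (k - 1))%R by ring.
rewrite divzMDl // !qzD !qz_mul; ring.
Qed.

Lemma sgnN (k : int) : ((-1 : C) ^ (- k)) = (-1) ^ k.
Proof.
have h : (-1 : C) ^ k * (-1) ^ k = 1 by rewrite -expfzMl mulrNN mulr1 exp1rz.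
have hn : (-1 : C) ^ k != 0 by rewrite expfz_neq0 // oppr_eq0 oner_neq0.
rewrite -invr_expz; apply: (mulfI hn); by rewrite mulfV // h.
Qed.

Lemma sgnS (k : int) : ((-1 : C) ^ (k + 1)) = - (-1) ^ k.
Proof. by rewrite expfzDr ?oppr_eq0 ?oner_neq0 // expr1z mulrN1. Qed.

Lemma expGe j : q ^+ ((1 + j) * e + 1) = q * (q * q ^+ j) ^+ e.
Proof. by rewrite addn1 exprS exprM add1n exprS. Qed.

Lemma wz_term (he : (e <= 1)%N) (j : nat) (k : int) :
  aj j * (Bt k * Mx k j.+1 + Bt (- k) * Mx (k + 1) j.+1)
  - bj j * (Bt k * Mx k j + Bt (- k) * Mx (k + 1) j) = Gt j (k + 1) - Gt j k.
Proof.
rewrite /Bt /Gt !expGe !opprK.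
have -> : (l%:Z - (k + 1) = (l%:Z - k) - 1)%R by ring.
have -> : (m%:Z - (k + 1) = (m%:Z - k) - 1)%R by ring.
have -> : (n%:Z - (k + 1) = (n%:Z - k) - 1)%R by ring.
have -> : (l%:Z + (k + 1) - 1 = l%:Z + k)%R by ring.
have -> : (m%:Z + (k + 1) - 1 = m%:Z + k)%R by ring.
have -> : (n%:Z + (k + 1) - 1 = n%:Z + k)%R by ring.
rewrite !rq_pred sgnN sgnS expB expBm expG1.
rewrite /Mx (expo1 k j) (expo2 k j) (expo3 k j) sjS qzS [q ^ k * q]mulrC.
rewrite !qzD (qzN k) !qz_nat.
rewrite /aj /bj -addnn !exprD.
have hK := qz_neq0 k.
have h2 : 1 - q ^+ j.+1 != 0 by rewrite onem_neq0.
have [-> | ->] : e = 0%N \/ e = 1%N by lia.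
- case: j h2 => [|j] h2.
    rewrite PpSq !PpS !Pp0 Dp0 ?expr0 ?expr1.
    field; nz.
  rewrite !PpSq !PpS !DpS !(exprS q j.+1) ?expr0 ?expr1.
  have hJ := qX_neq0 j.+1.
  field; nz.
- case: j h2 => [|j] h2.
    rewrite PpSq !PpS !Pp0 Dp0 ?expr0 ?expr1.
    field; nz.
  rewrite !PpSq !PpS !DpS !(exprS q j.+1) ?expr0 ?expr1.
  have hJ := qX_neq0 j.+1.
  field; nz.
Qed.

Variable M : nat.
Hypothesis hM : (l <= M)%N.

Definition Sj (j : nat) := \sum_(i < M.*2.+1) Bt (i%:Z - M%:Z) * Mx (i%:Z - M%:Z) j.

Lemma sum_symB j :
  \sum_(i < M.*2.+1) Bt (- (i%:Z - M%:Z)) * Mx (i%:Z - M%:Z + 1) j = Sj j.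
Proof.
rewrite /Sj (reindex_inj rev_ord_inj) /=.
apply: eq_bigr => -[i hi0] _ /=.
have hi : (i < M + M + 1)%N by rewrite addn1 addnn.
have -> : (- ((M.*2.+1 - i.+1)%N%:Z - M%:Z) = i%:Z - M%:Z)%R.
  rewrite -addnn subSS; lia.
have -> : ((M.*2.+1 - i.+1)%N%:Z - M%:Z + 1 = 1 - (i%:Z - M%:Z))%R.
  rewrite -addnn subSS; lia.
by rewrite Mx_sym.
Qed.

Lemma tele_int (f : int -> C) (N : nat) (z : int) :
  \sum_(i < N) (f (i%:Z - z + 1) - f (i%:Z - z)) = f (N%:Z - z) - f (- z).
Proof.
elim: N => [|N IH]; first by rewrite big_ord0 sub0r subrr.
rewrite big_ord_recr /= IH.
have -> : (N%:Z - z + 1 = N.+1%:Z - z)%R by lia.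
by rewrite addrC addrA subrK.
Qed.

Lemma Gt_out j : Gt j (M.*2.+1%:Z - M%:Z) = 0 /\ Gt j (- M%:Z) = 0.
Proof.
split; rewrite /Gt.
  rewrite (rq_neg (l%:Z - _)) ?mulr0 ?mul0r //. rewrite -addnn; lia.
rewrite (rq_neg (l%:Z + _ - 1)) ?mulr0 ?mul0r //. lia.
Qed.

Hypothesis he : (e <= 1)%N.

Lemma rec_S j : aj j * Sj j.+1 = bj j * Sj j.
Proof.
have H : \sum_(i < M.*2.+1)
   (aj j * (Bt (i%:Z - M%:Z) * Mx (i%:Z - M%:Z) j.+1
            + Bt (- (i%:Z - M%:Z)) * Mx (i%:Z - M%:Z + 1) j.+1)
    - bj j * (Bt (i%:Z - M%:Z) * Mx (i%:Z - M%:Z) j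
            + Bt (- (i%:Z - M%:Z)) * Mx (i%:Z - M%:Z + 1) j)) = 0.
  under eq_bigr => i _ do rewrite wz_term //.
  rewrite tele_int.
  have [-> ->] := Gt_out j.
  by rewrite subrr.
move: H; rewrite sumrB -!mulr_sumr !big_split /= !sum_symB -/(Sj j) -/(Sj j.+1).
move=> /eqP; rewrite subr_eq0 => /eqP H.
apply: (mulIf h2C).
move: H. set a := aj j. set b := bj j. set x := Sj j.+1. set y := Sj j. move=> H. apply/eqP; rewrite -subr_eq0; apply/eqP; rewrite (_ : a * x * 2 - b * y * 2 = a * (x + x) - b * (y + y)); [by rewrite H subrr | ring].
Qed.

Definition At (j : nat) : C :=
  q ^+ (j * j + e * j) * qfac q (l + m + n - j)
  * rqfac q j%:Z * rqfac q (l%:Z - j%:Z) * rqfac q (m%:Z - j%:Z) * rqfac q (n%:Z - j%:Z).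

Lemma lhs_At u k : lhs_term q e l m n u k = At k * rqfac q (u + k)%:Z.
Proof. by []. Qed.

Lemma rq_shift (p j : nat) :
  rqfac q (p%:Z - j.+1%:Z) = rqfac q (p%:Z - j%:Z) * (1 - q ^+ p / q ^+ j).
Proof.
have -> : (p%:Z - j.+1%:Z = (p%:Z - j%:Z) - 1)%R by lia.
by rewrite rq_pred qzD qzN !qz_nat.
Qed.

Definition mu := minn l (minn m n).

Lemma rec_A j : (j < mu)%N -> aj j * At j.+1 = bj j * At j.
Proof.
rewrite /mu => hj.
rewrite /At /aj /bj !rq_shift.
have hN : (l + m + n - j = (l + m + n - j.+1).+1)%N by lia.
rewrite hN qfacS.
have -> : q ^+ (l + m + n) = q ^+ (l + m + n - j.+1).+1 * q ^+ j.
  by rewrite -exprD; congr (_ ^+ _); lia.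
have -> : q ^+ (j.+1 * j.+1 + e * j.+1) = q ^+ (j * j + e * j) * q ^+ (j.*2 + 1 + e).
  by rewrite -exprD; congr (_ ^+ _); rewrite -addnn; nia.
have -> : rqfac q j%:Z = rqfac q j.+1%:Z * (1 - q ^+ j.+1).
  by rewrite -qz_nat -rq_pred; congr (rqfac q _); lia.
have hJ := qX_neq0 j.
field; nz.
Qed.

Lemma Bt_zero (k : int) : (mu < `|k|)%N -> Bt k = 0.
Proof.
rewrite /mu => hk; rewrite /Bt.
have [H|[H|H]] : (l < `|k|)%N \/ (m < `|k|)%N \/ (n < `|k|)%N by lia.
- case: (lerP 0 k) => h0.
    by rewrite (rq_neg (l%:Z - k)) ?mulr0 ?mul0r //; lia.
  by rewrite (rq_neg (l%:Z + k)) ?mulr0 ?mul0r //; lia.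
- case: (lerP 0 k) => h0.
    by rewrite (rq_neg (m%:Z - k)) ?mulr0 ?mul0r //; lia.
  by rewrite (rq_neg (m%:Z + k)) ?mulr0 ?mul0r //; lia.
- case: (lerP 0 k) => h0.
    by rewrite (rq_neg (n%:Z - k)) ?mulr0 ?mul0r //; lia.
  by rewrite (rq_neg (n%:Z + k)) ?mulr0 ?mul0r //; lia.
Qed.

Lemma At_zero j : (mu < j)%N -> At j = 0.
Proof.
rewrite /mu => hj; rewrite /At.
have [H|[H|H]] : (l < j)%N \/ (m < j)%N \/ (n < j)%N by lia.
- by rewrite (rq_neg (l%:Z - j%:Z)) ?mulr0 ?mul0r //; lia.
- by rewrite (rq_neg (m%:Z - j%:Z)) ?mulr0 ?mul0r //; lia.
- by rewrite (rq_neg (n%:Z - j%:Z)) ?mulr0 ?mul0r //; lia.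
Qed.

Lemma BM_zero (k : int) j : (mu <= j)%N -> (k != - (mu%:Z)) || (mu < j)%N -> Bt k * Mx k j = 0.
Proof.
move=> hj hk.
case: (ltnP mu `|k|) => h.
  by rewrite Bt_zero // mul0r.
rewrite Mx_zero ?mulr0 //.
  move: hk; rewrite /mu in hj h *; case/orP; [move/eqP|]; lia.
rewrite /mu in hj h *; lia.
Qed.

Lemma Sj_zero j : (mu < j)%N -> Sj j = 0.
Proof.
move=> hj; rewrite /Sj big1 // => i _.
by rewrite BM_zero //; [exact: ltnW | rewrite hj orbT].
Qed.

Lemma qfac_ord p : qfac q p = \prod_(i < p) (1 - q ^+ i.+1).
Proof. by rewrite /qfac big_add1 /= big_mkord. Qed.

Lemma Pp_top j : Pp j (q ^+ j.+1) = qfac q j.*2.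
Proof.
rewrite /Pp qfac_ord; apply: eq_bigr => i _; congr (_ - _).
have hJ := qX_neq0 j. rewrite !exprS. field; nz.
Qed.

Lemma bin2S p : ('C(p.+1, 2) * 2 = p.+1 * p)%N.
Proof.
elim: p => [|p IH]; first by [].
rewrite binS bin1 mulnDl IH; lia.
Qed.

Lemma base_val : Bt (- mu%:Z) * Mx (- mu%:Z) mu = At mu.
Proof.
set u := mu.
have hMx : Mx (- u%:Z) u = Mx u.+1%:Z u by rewrite -Mx_sym; congr Mx; lia.
rewrite hMx /Mx qz_nat Pp_top /Bt /At /sj !opprK sgnN.
have hC := bin2S u.
have hE : q ^ ((5 * (- u%:Z) * (- u%:Z) - (1 + 2 * e%:Z) * (- u%:Z)) %/ 2)%Z
   * q ^+ 'C(u.+1, 2) * q ^ (- ((u.+1%:Z - 1) * (u.+1%:Z + u%:Z))) = q ^+ (u * u + e * u).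
  have -> : (5 * (- u%:Z) * (- u%:Z) - (1 + 2 * e%:Z) * (- u%:Z)
     = (2 * u%:Z * u%:Z + e%:Z * u%:Z + 'C(u.+1, 2)%:Z) * 2)%R.
    have hC' : ('C(u.+1, 2)%:Z * 2 = u.+1%:Z * u%:Z)%R by nia.
    nia.
  rewrite mulzK // -!qz_nat -!qzD; congr (q ^ _).
  have hC' : ('C(u.+1, 2)%:Z * 2 = u.+1%:Z * u%:Z)%R by nia.
  nia.
rewrite -hE -invr_sign -exprnP.
have hs : (-1 : C) ^+ u != 0 by rewrite expf_neq0 // oppr_eq0 oner_neq0.
rewrite -!PoszD !rq_nat.
have hmin : (u = l /\ (l <= m)%N /\ (l <= n)%N) \/ (u = m /\ (m <= l)%N /\ (m <= n)%N)
            \/ (u = n /\ (n <= l)%N /\ (n <= m)%N) by rewrite /u /mu; lia.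
have h1 := qfac_neq0.
case: hmin => [[hu [h2 h3]]|[[hu [h2 h3]]|[hu [h2 h3]]]].
- rewrite hu in hs *.
  have -> : (l + m + n - l = m + n)%N by lia.
  rewrite -addnn (addnC m l) (addnC n l).
  field; nz.
- rewrite hu in hs *.
  have -> : (l + m + n - m = l + n)%N by lia.
  rewrite -addnn (addnC n m).
  field; nz.
- rewrite hu in hs *.
  have -> : (l + m + n - n = l + m)%N by lia.
  rewrite -addnn.
  field; nz.
Qed.

Lemma Sj_base : Sj mu = At mu.
Proof.
have hi : (M - mu < M.*2.+1)%N by rewrite -addnn /mu; lia.
rewrite /Sj (bigD1 (Ordinal hi)) //= big1 ?addr0.
  have -> : ((M - mu)%N%:Z - M%:Z = - mu%:Z)%R by rewrite /mu; lia.
  exact: base_val.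
move=> i hneq; apply: BM_zero => //; apply/orP; left.
have : nat_of_ord i != (M - mu)%N.
  by move: hneq; apply: contra => /eqP h; apply/eqP; apply: val_inj.
rewrite /mu => /eqP h; apply/eqP; lia.
Qed.

Lemma bj_neq0 j : (j < mu)%N -> bj j != 0.
Proof.
rewrite /mu => hj.
have hp : forall p, (j < p)%N -> 1 - q ^+ p / q ^+ j != 0.
  by move=> p hp; rewrite -expfB // onem_neq0 // subn_gt0.
rewrite /bj !mulf_neq0 ?qX_neq0 // hp //; lia.
Qed.

Lemma Sj_At j : Sj j = At j.
Proof.
case: (ltnP mu j) => h; first by rewrite Sj_zero ?At_zero.
suff H : forall d j, (j + d = mu)%N -> Sj j = At j.
  by apply: (H (mu - j)%N); lia.
elim => [|d IH] {h} j hj.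
  by move: hj; rewrite addn0 => ->; exact: Sj_base.
have IH' := IH j.+1 (etrans (addSnnS j d) hj).
have hjmu : (j < mu)%N by lia.
apply/eqP; rewrite -(inj_eq (mulfI (bj_neq0 j hjmu))); apply/eqP.
by rewrite -rec_S -rec_A // IH'.
Qed.

End Sum.

End Basic.

Theorem corollary5p4 (R : rcfType) (q : R[i]) (l m n u : nat) :
  0 < `|q| < 1 ->
  let N := (l + m + n + u).+1 in
  (\sum_(0 <= k < N) lhs_term q 0 l m n u k
     = \sum_(0 <= i < N + N + 1) rhs_term q 0 l m n u (i%:Z - N%:Z))
  /\
  (\sum_(0 <= k < N) lhs_term q 1 l m n u k
     = \sum_(0 <= i < N + N + 1) rhs_term q 1 l m n u (i%:Z - N%:Z)).
Proof.
move=> /andP [hq0' hq1'] N.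
have hq0 : q != 0 by rewrite -normr_gt0.
have hq1 : forall k : nat, (0 < k)%N -> q ^+ k != 1.
  move=> k hk; apply/eqP => h.
  have := congr1 (fun x => `|x|) h; rewrite normrX normr1 => h'.
  have : `|q| ^+ k < 1 by rewrite exprn_ilt1 // ?normr_ge0 //; lia.
  by rewrite h' ltxx.
have h2C : (2 : R[i]) != 0 by rewrite pnatr_eq0.
have hM : (l <= N)%N by rewrite /N; lia.
suff main : forall e, (e <= 1)%N -> \sum_(0 <= k < N) lhs_term q e l m n u k
    = \sum_(0 <= i < N + N + 1) rhs_term q e l m n u (i%:Z - N%:Z).
  by split; apply: main.
move=> e he.
have -> : (N + N + 1 = N.*2.+1)%N by rewrite addn1 addnn.
rewrite !big_mkord.
under eq_bigr => k _ do rewrite lhs_At -(Sj_At _ _ hq0 hq1 h2C _ _ _ _ _ hM he) /Sj mulr_suml.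
rewrite exchange_big /=.
apply: eq_bigr => i _.
rewrite rhs_Bt.
under eq_bigr => k _ do rewrite -mulrA.
rewrite -mulr_sumr.
case: (ltnP `|(i%:Z - N%:Z)%R|%N N) => hk.
  by rewrite (expand _ _ hq0 hq1 h2C u _ _ hk).
by rewrite (Bt_zero _ _ hq0 h2C _ _ _ _ _ hM he) ?mul0r // /mu; lia.
Qed.
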